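(* Let $t_1,\dots,t_N\in[0,1]$ and consider the depolarizing channels $\Phi_{t_i}=t_i\,\mathrm{id}+(1-t_i)\Delta$ on $\mathcal L(\mathbb C^d)$, and let $K\le\min(N,D_d)$ be a positive integer. If there exists $S\subseteq[N]$ with $|S|=K$ and $\sum_{i\in S}t_i^2>1$, then $(\Phi_{t_1},\dots,\Phi_{t_N})$ is $(N,K)$-incompatible. If $\sum_{i\in S}t_i^2>1$ holds for every $S\subseteq[N]$ with $|S|=K$, then $(\Phi_{t_1},\dots,\Phi_{t_N})$ is $(N,K)$-strongly incompatible.
   Context: $\mathrm{id}(X)=X$, $\Delta(X)=(\operatorname{Tr}X)I/d$. $D_d$ is the maximal number of mutually unbiased orthonormal bases of $\mathbb C^d$ (bases $\mathbf e,\mathbf f$ unbiased if $|\langle e_i,f_j\rangle|=1/\sqrt d$). A family of channels is compatible if there is a channel into the tensor product of the output spaces whose marginals are the given channels. An $N$-tuple of channels is $(N,K)$-incompatible if at least one $K$-element subfamily is incompatible, and $(N,K)$-strongly incompatible if every $K$-element subfamily is incompatible. *)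

(* Defs.v *)
From HB Require Import structures.
From mathcomp Require Import all_boot all_order all_algebra.
From mathcomp Require Import complex.
From mathcomp Require Import reals.

Set Implicit Arguments.
Unset Strict Implicit.
Unset Printing Implicit Defensive.

Import Order.TTheory GRing.Theory Num.Theory.
Local Open Scope ring_scope.

Section QDefs.
Variable R : realType.
Local Notation C := R[i].

Definition op (T : finType) := T -> T -> C.

Definition qmap (T1 T2 : finType) := op T1 -> op T2.

Definition trace (T : finType) (X : op T) : C := \sum_(i : T) X i i.

Definition psd (T : finType) (X : op T) : Prop :=
  forall v : T -> C, 0 <= \sum_(i : T) \sum_(j : T) (v i)^* * X i j * v j.

Definition is_linear_map (T1 T2 : finType) (Phi : qmap T1 T2) : Prop :=
  forall (a : C) (X Y : op T1),
    Phi (fun i j => a * X i j + Y i j) = (fun k l => a * Phi X k l + Phi Y k l).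

(* (id_{M_k} (x) Phi) acting on L(C^k (x) C^T1) *)
Definition ampl (k : nat) (T1 T2 : finType) (Phi : qmap T1 T2)
  (X : op ('I_k * T1)%type) : op ('I_k * T2)%type :=
  fun p q => Phi (fun i j => X (p.1, i) (q.1, j)) p.2 q.2.

Definition completely_positive (T1 T2 : finType) (Phi : qmap T1 T2) : Prop :=
  forall (k : nat) (X : op ('I_k * T1)%type), psd X -> psd (ampl Phi X).

Definition trace_preserving (T1 T2 : finType) (Phi : qmap T1 T2) : Prop :=
  forall X : op T1, trace (Phi X) = trace X.

Definition channel (T1 T2 : finType) (Phi : qmap T1 T2) : Prop :=
  [/\ is_linear_map Phi, completely_positive Phi & trace_preserving Phi].

(* depolarizing channel Phi_t = t id + (1 - t) Delta on L(C^d),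
   Delta(X) = (Tr X) I / d *)
Definition depol (d : nat) (t : R) : qmap 'I_d 'I_d :=
  fun X i j => (t%:C)%C * X i j + ((1 - t)%:C)%C * (trace X / d%:R * (i == j)%:R).

(* Tensor product of |I| copies of C^d: basis indexed by {ffun I -> 'I_d}.
   Partial trace over all factors except the i-th. *)
Definition upd (I : finType) (d : nat) (z : {ffun I -> 'I_d}) (i : I) (b : 'I_d)
  : {ffun I -> 'I_d} := [ffun j => if j == i then b else z j].

Definition marginal (I : finType) (d : nat) (i : I)
  (Y : op ({ffun I -> 'I_d})) : op 'I_d :=
  fun a b => \sum_(z : {ffun I -> 'I_d} | z i == a) Y z (upd z i b).

Definition compatible (I : finType) (d : nat) (Phi : I -> qmap 'I_d 'I_d) : Prop :=
  exists Psi : qmap 'I_d ({ffun I -> 'I_d}),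
    channel Psi /\ forall (i : I) (X : op 'I_d), marginal i (Psi X) = Phi i X.

Definition subfamily (N d : nat) (Phi : 'I_N -> qmap 'I_d 'I_d) (S : {set 'I_N})
  : {i : 'I_N | i \in S} -> qmap 'I_d 'I_d := fun i => Phi (sval i).

Definition NK_incompatible (N K d : nat) (Phi : 'I_N -> qmap 'I_d 'I_d) : Prop :=
  exists S : {set 'I_N}, #|S| = K /\ ~ compatible (@subfamily N d Phi S).

Definition NK_strongly_incompatible (N K d : nat) (Phi : 'I_N -> qmap 'I_d 'I_d)
  : Prop :=
  forall S : {set 'I_N}, #|S| = K -> ~ compatible (@subfamily N d Phi S).

Definition inner (d : nat) (u v : 'I_d -> C) : C := \sum_(k < d) (u k)^* * v k.

Definition orthonormal_basis (d : nat) (e : 'I_d -> 'I_d -> C) : Prop :=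
  forall i j, inner (e i) (e j) = (i == j)%:R.

Definition unbiased (d : nat) (e f : 'I_d -> 'I_d -> C) : Prop :=
  forall i j, `|inner (e i) (f j)| = (sqrtC (d%:R : C))^-1.

Definition has_mubs (d m : nat) : Prop :=
  exists B : 'I_m -> 'I_d -> 'I_d -> C,
    (forall k, orthonormal_basis (B k)) /\
    (forall k l, k != l -> unbiased (B k) (B l)).

Definition max_mubs (d D : nat) : Prop :=
  has_mubs d D /\ forall m, has_mubs d m -> (m <= D)%N.

End QDefs.

(* Main.v *)
Require Import Defs.
From HB Require Import structures.
From mathcomp Require Import all_boot all_order all_algebra.
From mathcomp Require Import complex.
From mathcomp Require Import reals.
From mathcomp Require Import ring lra.
From Stdlib Require Import FunctionalExtensionality.
Import Order.TTheory GRing.Theory Num.Theory.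
Local Open Scope ring_scope.
Set Implicit Arguments.
Unset Strict Implicit.
Unset Printing Implicit Defensive.
Section Gen.
Variable C : numClosedFieldType.

Definition psdg (T : finType) (X : T -> T -> C) : Prop :=
  forall v : T -> C, 0 <= \sum_(i : T) \sum_(j : T) (v i)^* * X i j * v j.

Lemma sum_delta (T : finType) (j : T) (F : T -> C) :
  \sum_a (a == j)%:R * F a = F j.
Proof.
rewrite (bigD1 j) //= eqxx mul1r big1 ?addr0 // => a /negbTE ->; by rewrite mul0r.
Qed.

Lemma sum_delta' (T : finType) (j : T) (F : T -> C) :
  \sum_a F a * (a == j)%:R = F j.
Proof. by rewrite -[RHS](sum_delta j); apply: eq_bigr => a _; rewrite mulrC. Qed.

Lemma sum2 (T : finType) (j k : T) (x y : C) (F : T -> C) :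
  \sum_b F b * ((b == j)%:R * x + (b == k)%:R * y) = F j * x + F k * y.
Proof.
rewrite -(sum_delta' j (fun b => F b * x)) -(sum_delta' k (fun b => F b * y)) -big_split.
by apply: eq_bigr => b _ /=; rewrite mulrDr !mulrA ![_ * _%:R * _]mulrAC.
Qed.

Lemma quad2 (T : finType) (X : T -> T -> C) j k x y :
  \sum_a \sum_b (((a == j)%:R * x + (a == k)%:R * y)^*) * X a b
       * ((b == j)%:R * x + (b == k)%:R * y)
  = x^* * X j j * x + x^* * X j k * y + y^* * X k j * x + y^* * X k k * y.
Proof.
under eq_bigr => a _ do rewrite (sum2 j k x y (fun b => (((a == j)%:R * x + (a == k)%:R * y)^*) * X a b)).
have H : forall a, ((a == j)%:R * x + (a == k)%:R * y)^* =
    (a == j)%:R * x^* + (a == k)%:R * y^*.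
  by move=> a; rewrite rmorphD !rmorphM /= !rmorph_nat.
transitivity (\sum_a (X a j * x + X a k * y) * ((a == j)%:R * x^* + (a == k)%:R * y^*)).
  by apply: eq_bigr => a _; rewrite H; ring.
rewrite (sum2 j k (x^*) (y^*) (fun a => X a j * x + X a k * y)).
rewrite !mulrDl; ring.
Qed.

End Gen.

Lemma two_eq0 (C : numClosedFieldType) (x : C) : 2 * x = 0 -> x = 0.
Proof. by move/eqP; rewrite mulf_eq0 pnatr_eq0 /= => /eqP. Qed.

Lemma herm_alg (C : numClosedFieldType) (p q b c bc cc i : C) : i ^+ 2 = -1 ->
  p + bc + cc + q = p + b + c + q ->
  p + bc * - i + i * cc + i * q * - i = p + b * i + - i * c + - i * q * i -> cc = b.
Proof.
move=> hi e1 e2; apply/eqP; rewrite -subr_eq0; apply/eqP/two_eq0.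
transitivity ((p + bc + cc + q - (p + b + c + q)) - i * ((p + bc * - i + i * cc + i * q * - i) - (p + b * i + - i * c + - i * q * i)) - (1 + i^+2)*(bc - cc + b - c)); first by ring.
by rewrite e1 e2 hi !subrr mulr0 mul0r !subr0.
Qed.

Lemma conjNi (C : numClosedFieldType) : (- 'i)^* = 'i :> C.
Proof. by rewrite -mulN1r rmorphM /= conjCi rmorphN1 mulN1r opprK. Qed.

Lemma conjN (C : numClosedFieldType) (x : C) : (- x)^* = - x^*.
Proof. by rewrite rmorphN. Qed.

Section Psd.
Variable C : numClosedFieldType.
Variable T : finType.
Variable X : T -> T -> C.
Hypothesis hX : psdg X.

Lemma psdQ j k x y : 0 <= x^* * X j j * x + x^* * X j k * y + y^* * X k j * x + y^* * X k k * y.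
Proof. rewrite -quad2; exact: hX. Qed.

Lemma psd_diag j : 0 <= X j j.
Proof.
have := psdQ j j 1 0; by rewrite rmorph1 rmorph0 !mulr0 !mul0r !addr0 mulr1 mul1r.
Qed.

Lemma psd_diag_conj j : (X j j)^* = X j j.
Proof. exact/conj_Creal/ger0_real/psd_diag. Qed.

Lemma psd_herm j k : X k j = (X j k)^*.
Proof.
have h1 := psdQ j k 1 1.
have h2 := psdQ j k 1 'i.
move: h1 h2; rewrite !rmorph1 !mulr1 !mul1r conjCi => h1 h2.
have e1 := conj_Creal (ger0_real h1).
have e2 := conj_Creal (ger0_real h2).
move: e1 e2; rewrite !rmorphD !rmorphM /= !psd_diag_conj conjNi conjCi => e1 e2.
rewrite -(herm_alg (sqrCi C) e1 e2); exact/esym/conjCK.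
Qed.

Lemma psd_cs j k : X j k * (X j k)^* <= X j j * X k k.
Proof.
set p := X j j; set q := X k k; set b := X j k.
have hp : 0 <= p by exact: psd_diag.
have hq : 0 <= q by exact: psd_diag.
have cq : q^* = q by exact: psd_diag_conj.
have cp : p^* = p by exact: psd_diag_conj.
have hc : X k j = b^* by exact: psd_herm.
have ha : 0 <= q * (p * q - b * b^*).
  have := psdQ j k q (- b^*); rewrite hc -/p -/q -/b cq conjN (@conjCK C).
  suff -> : q * p * q + q * b * - b^* + - b * b^* * q + - b * q * - b^* = q * (p * q - b * b^*) by [].
  by ring.
have hb : 0 <= p * (p * q - b * b^*).
  have := psdQ k j p (- b); rewrite hc -/p -/q -/b cp conjN.
  suff -> : p * q * p + p * b^* * - b + - b^* * b * p + - b^* * p * - b = p * (p * q - b * b^*) by [].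
  by ring.
have hs : 0 <= (p + q) * (p * q - b * b^*) by rewrite mulrDl addr_ge0.
rewrite -subr_ge0.
have := addr_ge0 hp hq; rewrite le_eqVlt => /orP [/eqP h0 | hpos].
  have p0 : p = 0.
    by apply/le_anti; rewrite hp andbT [X in _ <= X]h0 lerDl.
  have q0 : q = 0 by move: h0; rewrite p0 add0r.
  have := psdQ j k 1 (- b^*); rewrite hc -/p -/q -/b rmorph1 conjN (@conjCK C) p0 q0.
  suff -> : 1 * 0 * 1 + 1 * b * - b^* + - b * b^* * 1 + - b * 0 * - b^* = - (b * b^*) *+ 2 by rewrite pmulrn_lge0 // oppr_ge0 => h; rewrite mul0r sub0r oppr_ge0.
  by rewrite mulr2n; ring.
by rewrite -(pmulr_rge0 _ hpos).
Qed.

End Psd.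

Definition inn (C : numClosedFieldType) (d : nat) (u v : 'I_d -> C) : C :=
  \sum_(k < d) (u k)^* * v k.

Section ConjL.
Variable C : numClosedFieldType.
Lemma conjD (x y : C) : (x + y)^* = x^* + y^*. Proof. by rewrite rmorphD. Qed.
Lemma conjB (x y : C) : (x - y)^* = x^* - y^*. Proof. by rewrite rmorphB. Qed.
Lemma conjM (x y : C) : (x * y)^* = x^* * y^*. Proof. by rewrite rmorphM. Qed.
Lemma conjV (x : C) : (x^-1)^* = (x^*)^-1. Proof. by rewrite fmorphV. Qed.
Lemma conjX (x : C) n : (x ^+ n)^* = (x^*) ^+ n. Proof. by rewrite rmorphXn. Qed.
Lemma conj_sum (I : Type) (r : seq I) (P : pred I) (F : I -> C) :
  (\sum_(i <- r | P i) F i)^* = \sum_(i <- r | P i) (F i)^*.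
Proof. by rewrite rmorph_sum. Qed.
Lemma conj_prod (I : Type) (r : seq I) (P : pred I) (F : I -> C) :
  (\prod_(i <- r | P i) F i)^* = \prod_(i <- r | P i) (F i)^*.
Proof. by rewrite rmorph_prod. Qed.
End ConjL.

Lemma conj_nat_div (C : numClosedFieldType) (b : bool) (n : nat) :
  ((b%:R : C) / n%:R)^* = b%:R / n%:R.
Proof. by rewrite conjM conjV !conjC_nat. Qed.

Section HS.
Variable C : numClosedFieldType.
Variable d : nat.
Hypothesis hd : (0 < d)%N.
Variable I : finType.
Variable sig : 'I_d -> 'I_d -> C.
Hypothesis hsig : psdg sig.
Variable u : I -> 'I_d -> C.
Variable t : I -> C.
Hypothesis ht : forall i, (t i)^* = t i.
Hypothesis hu1 : forall i, inn (u i) (u i) = 1.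
Hypothesis hG : forall i i', i != i' -> inn (u i) (u i') * inn (u i') (u i) = d%:R^-1.

Let dn : (d%:R : C) != 0. Proof. by rewrite pnatr_eq0 -lt0n. Qed.

Definition Pm i (j k : 'I_d) : C := u i j * (u i k)^* - (j == k)%:R / d%:R.
Definition Zm j k : C := \sum_i t i * Pm i j k.
Definition tau : C := \sum_j sig j j.
Definition Lq : C := \sum_j \sum_k sig j k * Zm k j.
Definition s2 : C := \sum_i t i ^+ 2.

Lemma Pm_conj i j k : (Pm i j k)^* = Pm i k j.
Proof.
rewrite /Pm conjB conjM (@conjCK C) conj_nat_div eq_sym; congr (_ - _); exact: mulrC.
Qed.

Lemma Zm_conj j k : (Zm j k)^* = Zm k j.
Proof.
rewrite /Zm conj_sum; apply: eq_bigr => i _ /=; by rewrite conjM ht Pm_conj.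
Qed.

Lemma sum_uu i : \sum_j u i j * (u i j)^* = 1.
Proof. rewrite -(hu1 i) /inn; apply: eq_bigr => j _; exact: mulrC. Qed.

Lemma trPm i : \sum_j Pm i j j = 0.
Proof.
rewrite /Pm sumrB sum_uu.
under eq_bigr do rewrite eqxx.
by rewrite sumr_const card_ord /= -[_ *+ d]mulr_natr div1r mulVf // subrr.
Qed.

Lemma trZm : \sum_j Zm j j = 0.
Proof.
rewrite /Zm exchange_big /= big1 // => i _; by rewrite -mulr_sumr trPm mulr0.
Qed.

Lemma natb_sq (b : bool) : (b%:R : C) * b%:R = b%:R.
Proof. by case: b; rewrite /= ?mulr1 ?mulr0. Qed.

Lemma sum_delta_l (T : finType) (j : T) (F : T -> C) :
  \sum_a (a == j)%:R * F a = F j.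
Proof. exact: sum_delta. Qed.

Lemma PP i i' : \sum_j \sum_k Pm i j k * Pm i' k j =
   (if i == i' then 1 else d%:R^-1) - d%:R^-1.
Proof.
have E : forall j k, Pm i j k * Pm i' k j =
   (u i' j)^* * u i j * ((u i k)^* * u i' k) - (k == j)%:R * (u i k * (u i k)^* / d%:R)
   - (k == j)%:R * (u i' k * (u i' k)^* / d%:R) + (k == j)%:R / (d%:R * d%:R).
  move=> j k; rewrite /Pm [(j == k)]eq_sym.
  case: (k =P j) => [->|_]; rewrite /= ?mulr1n ?mulr0n; last by rewrite !mul0r !subr0 addr0; ring.
  by rewrite !mul1r invfM; ring.
under eq_bigr => j _ do rewrite (eq_bigr _ (fun k _ => E j k)) !big_split /= !sumrN
   -mulr_sumr !sum_delta_l.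
rewrite !big_split /= !sumrN -mulr_suml.
rewrite (_ : \sum_j _ = inn (u i') (u i)); last by apply: eq_bigr => j _.
rewrite -!mulr_suml !sum_uu sumr_const card_ord.
have -> : inn (u i') (u i) * inn (u i) (u i') = if i == i' then 1 else d%:R^-1.
  case: eqP => [->|/eqP ne]; first by rewrite hu1 mulr1.
  by rewrite mulrC hG.
rewrite -(mulr_natr ((d%:R * d%:R)^-1) d); by case: (i == i'); field; apply: dn.
Qed.

Lemma sum_delta_r (T : finType) (j : T) (F : T -> C) :
  \sum_a F a * (j == a)%:R = F j.
Proof. rewrite -[RHS](sum_delta j); apply: eq_bigr => a _; by rewrite mulrC eq_sym. Qed.

Lemma sum4 (F : 'I_d -> 'I_d -> I -> I -> C) :
  \sum_j \sum_k \sum_i \sum_i' F j k i i' = \sum_i \sum_i' \sum_j \sum_k F j k i i'.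
Proof.
under eq_bigr => j _ do rewrite exchange_big /=.
under eq_bigr => j _ do under eq_bigr => i _ do rewrite exchange_big /=.
rewrite exchange_big /=; apply: eq_bigr => i _; by rewrite exchange_big.
Qed.

Lemma ZZ : \sum_j \sum_k Zm j k * (Zm j k)^* = (1 - d%:R^-1) * s2.
Proof.
under eq_bigr => j _ do under eq_bigr => k _ do rewrite Zm_conj /Zm big_distrlr /=.
rewrite sum4.
have E : forall i i', \sum_j \sum_k t i * Pm i j k * (t i' * Pm i' k j) =
   (i' == i)%:R * (t i * t i' * (1 - d%:R^-1)).
  move=> i i'.
  under eq_bigr => j _ do under eq_bigr => k _ do rewrite mulrACA.
  under eq_bigr => j _ do rewrite -mulr_sumr.
  rewrite -mulr_sumr PP eq_sym.
  by case: (i' == i) => /=; [rewrite mul1r | rewrite subrr mulr0 mul0r].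
under eq_bigr => i _ do rewrite (eq_bigr _ (fun i' _ => E i i')) sum_delta_l.
rewrite /s2 mulr_sumr; apply: eq_bigr => i _; by rewrite mulrC expr2.
Qed.
Lemma tau_ge0 : 0 <= tau.
Proof. by apply: sumr_ge0 => j _; apply: psd_diag. Qed.

Lemma tau_conj : tau^* = tau.
Proof. exact/conj_Creal/ger0_real/tau_ge0. Qed.

Definition cc : C := tau / d%:R.
Lemma cc_conj : cc^* = cc.
Proof. by rewrite /cc conjM conjV conjC_nat tau_conj. Qed.

Definition Am j k : C := sig j k - (j == k)%:R * cc.

Lemma Am_conj j k : (Am j k)^* = Am k j.
Proof.
by rewrite /Am conjB conjM conjC_nat cc_conj -(psd_herm hsig) eq_sym.
Qed.

Lemma sumAA : \sum_j \sum_k Am j k * (Am j k)^* <= (1 - d%:R^-1) * tau ^+ 2.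
Proof.
have E : forall j k, Am j k * (Am j k)^* = sig j k * (sig j k)^*
    - (k == j)%:R * (sig k k * cc + cc * sig k k - cc * cc).
  move=> j k; rewrite Am_conj /Am (psd_herm hsig j k) [k == j]eq_sym.
  case: (j =P k) => [->|_] /=; last by rewrite !mul0r !subr0.
  rewrite !mul1r (psd_diag_conj hsig k); ring.
under eq_bigr => j _ do rewrite (eq_bigr _ (fun k _ => E j k)) sumrB sum_delta_l.
rewrite sumrB.
rewrite !big_split /= sumr_const card_ord -!mulr_suml -mulr_sumr -/tau.
have H : \sum_j \sum_k sig j k * (sig j k)^* <= tau ^+ 2.
  rewrite expr2 big_distrlr /=; apply: ler_sum => j _; apply: ler_sum => k _.
  exact: (psd_cs hsig).
have -> : tau * cc + cc * tau + - (cc * cc) *+ d = tau ^+ 2 / d%:R.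
  by rewrite -(mulr_natr (- (cc * cc)) d) /cc; field; apply: dn.
by rewrite mulrBl mul1r (mulrC (d%:R^-1)); apply: lerB => //.
Qed.

Lemma cross : \sum_j \sum_k (Am j k * (Zm j k)^* + Zm j k * (Am j k)^*) = 2 * Lq.
Proof.
have h1 : \sum_j \sum_k Am j k * (Zm j k)^* = Lq.
  under eq_bigr => j _ do under eq_bigr => k _ do rewrite Zm_conj /Am mulrBl.
  under eq_bigr => j _ do rewrite sumrB.
  rewrite sumrB /Lq; apply/eqP; rewrite subr_eq addrC -subr_eq subrr eq_sym; apply/eqP.
  under eq_bigr => j _ do under eq_bigr => k _ do rewrite -mulrA mulrC.
  under eq_bigr => j _ do rewrite (sum_delta_r j (fun k => cc * Zm k j)).
  by rewrite -mulr_sumr trZm mulr0.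
have h2 : \sum_j \sum_k Zm j k * (Am j k)^* = Lq.
  rewrite -h1 exchange_big /=; apply: eq_bigr => j _; apply: eq_bigr => k _.
  by rewrite Am_conj Zm_conj mulrC.
under eq_bigr => j _ do rewrite big_split.
by rewrite big_split /= h1 h2 mulr2n mulrDl mul1r.
Qed.

Lemma hs_main : 2 * tau * Lq <= tau ^+ 2 * ((1 - d%:R^-1) * (1 + s2)).
Proof.
have H : 0 <= \sum_j \sum_k (Am j k - tau * Zm j k) * (Am j k - tau * Zm j k)^*.
  by apply: sumr_ge0 => j _; apply: sumr_ge0 => k _; apply: mul_conjC_ge0.
have E : forall j k, (Am j k - tau * Zm j k) * (Am j k - tau * Zm j k)^* =
   Am j k * (Am j k)^* - tau * (Am j k * (Zm j k)^* + Zm j k * (Am j k)^*)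
   + tau ^+ 2 * (Zm j k * (Zm j k)^*).
  by move=> j k; rewrite conjB conjM tau_conj; ring.
move: H; under eq_bigr => j _ do rewrite (eq_bigr _ (fun k _ => E j k)) big_split /= sumrB -!mulr_sumr.
rewrite big_split /= sumrB -!mulr_sumr cross ZZ => H.
have := le_trans H (lerD (lerB sumAA (lexx _)) (lexx _)).
rewrite -subr_ge0 => H2; rewrite -subr_ge0.
suff -> : tau ^+ 2 * ((1 - d%:R^-1) * (1 + s2)) - 2 * tau * Lq =
  (1 - d%:R^-1) * tau ^+ 2 - tau * (2 * Lq) + tau ^+ 2 * ((1 - d%:R^-1) * s2) - 0 by [].
by ring.
Qed.

Lemma hs_final : 2 * Lq <= tau * ((1 - d%:R^-1) * (1 + s2)).
Proof.
have := tau_ge0; rewrite le_eqVlt => /orP [/eqP t0 | tpos].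
  have dz : forall j, sig j j = 0.
    have h0 : forall i : 'I_d, true -> 0 <= sig i i by move=> i _; apply: (psd_diag hsig).
    by move=> j; apply: (psumr_eq0P h0 (esym t0)).
  have sz : forall j k, sig j k = 0.
    move=> j k; apply/eqP; rewrite -mul_conjC_eq0 eq_le mul_conjC_ge0 andbT.
    by have := psd_cs hsig j k; rewrite !dz mul0r.
  rewrite -t0 mul0r /Lq big1 ?mulr0 // => j _; rewrite big1 // => k _; by rewrite sz mul0r.
rewrite -(ler_pM2l tpos) mulrA (mulrC tau 2) mulrA -expr2; exact: hs_main.
Qed.

End HS.

Section Main2.
Variable C : numClosedFieldType.
Variable d : nat.
Hypothesis hd2 : (1 < d)%N.
Variable I : finType.
Variable i0 : I.
Variable e : I -> 'I_d -> 'I_d -> C.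
Variable t : I -> C.
Hypothesis ht : forall i, (t i)^* = t i.
Hypothesis horth : forall i b b', inn (e i b) (e i b') = (b == b')%:R.
Hypothesis hG : forall i i', i != i' -> forall b b',
  inn (e i b) (e i' b') * inn (e i' b') (e i b) = d%:R^-1.
Variable sig : {ffun I -> 'I_d} -> 'I_d -> 'I_d -> C.
Hypothesis hpsd : forall a, psdg (sig a).
Hypothesis hM : forall i b j k, \sum_(a : {ffun I -> 'I_d} | a i == b) sig a j k =
  t i * (e i b j * (e i b k)^*) + (1 - t i) * ((j == k)%:R / d%:R).

Let hd : (0 < d)%N. Proof. exact: ltnW. Qed.
Let dn : (d%:R : C) != 0. Proof. by rewrite pnatr_eq0 -lt0n. Qed.

Definition ua (a : {ffun I -> 'I_d}) i := e i (a i).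

Lemma hu1a a i : inn (ua a i) (ua a i) = 1.
Proof. by rewrite /ua horth eqxx. Qed.

Lemma hGa a i i' : i != i' -> inn (ua a i) (ua a i') * inn (ua a i') (ua a i) = d%:R^-1.
Proof. by move=> ne; rewrite /ua hG. Qed.

Definition P1 (w : 'I_d -> C) j k : C := w j * (w k)^* - (j == k)%:R / d%:R.

Lemma PP1 (w : 'I_d -> C) : inn w w = 1 ->
  \sum_j \sum_k P1 w j k * P1 w k j = 1 - d%:R^-1.
Proof.
move=> hw.
have hG0 : forall i i' : unit, i != i' -> inn w w * inn w w = d%:R^-1 by case; case; rewrite eqxx.
have := @PP C d hd unit (fun _ => w) (fun _ => hw) hG0 tt tt.
by rewrite eqxx.
Qed.

Lemma trP1 (w : 'I_d -> C) : inn w w = 1 -> \sum_j P1 w j j = 0.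
Proof. move=> hw; exact: (@trPm C d hd unit (fun _ => w) (fun _ => hw) tt). Qed.

Lemma partI (i : I) (F : {ffun I -> 'I_d} -> C) :
  \sum_a F a = \sum_b \sum_(a : {ffun I -> 'I_d} | a i == b) F a.
Proof. by rewrite (partition_big (fun a : {ffun I -> 'I_d} => a i) predT). Qed.

Lemma M_P1 i b j k : \sum_(a : {ffun I -> 'I_d} | a i == b) sig a j k = t i * P1 (e i b) j k + (j == k)%:R / d%:R.
Proof. rewrite hM /P1; ring. Qed.

Lemma sum_tau : \sum_a tau (sig a) = d%:R.
Proof.
rewrite /tau exchange_big /=.
under eq_bigr => j _ do rewrite (partI i0) /= (eq_bigr _ (fun b _ => M_P1 i0 b j j)) eqxx.
rewrite exchange_big /=.
under eq_bigr => b _ do rewrite big_split /= -mulr_sumr trP1 ?horth ?eqxx // mulr0 add0r sumr_const card_ord.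
by rewrite sumr_const card_ord -(mulr_natr (1 / d%:R) d) div1r mulVf.
Qed.

Lemma sum_i i : \sum_a \sum_j \sum_k sig a j k * P1 (e i (a i)) k j = t i * (d%:R - 1).
Proof.
rewrite (partI i).
have E : forall b, \sum_(a : {ffun I -> 'I_d} | a i == b) \sum_j \sum_k sig a j k * P1 (e i (a i)) k j
   = \sum_j \sum_k (\sum_(a : {ffun I -> 'I_d} | a i == b) sig a j k) * P1 (e i b) k j.
  move=> b; rewrite exchange_big /=; apply: eq_bigr => j _.
  rewrite exchange_big /=; apply: eq_bigr => k _.
  by rewrite mulr_suml; apply: eq_bigr => a /eqP ->.
under eq_bigr => b _ do rewrite E.
have F : forall b, \sum_j \sum_k (t i * P1 (e i b) j k + (j == k)%:R / d%:R) * P1 (e i b) k j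
   = t i * (1 - d%:R^-1).
  move=> b.
  have G : forall j k, (t i * P1 (e i b) j k + (j == k)%:R / d%:R) * P1 (e i b) k j =
     t i * (P1 (e i b) j k * P1 (e i b) k j) + P1 (e i b) k j / d%:R * (j == k)%:R.
    by move=> j k; ring.
  under eq_bigr => j _ do rewrite (eq_bigr _ (fun k _ => G j k)) big_split /= -mulr_sumr (sum_delta_r j (fun k => P1 (e i b) k j / d%:R)).
  rewrite big_split /= -mulr_sumr PP1 ?horth ?eqxx // -mulr_suml trP1 ?horth ?eqxx //.
  by rewrite mul0r addr0.
under eq_bigr => b _ do under eq_bigr => j _ do under eq_bigr => k _ do rewrite M_P1.
under eq_bigr => b _ do rewrite F.
rewrite sumr_const card_ord -mulr_natr; field; apply: dn.
Qed.

Lemma sum_Lq : \sum_a Lq (sig a) (ua a) t = (d%:R - 1) * s2 t.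
Proof.
rewrite /Lq /Zm.
have E : forall a, \sum_j \sum_k sig a j k * (\sum_i t i * Pm (ua a) i k j)
    = \sum_i t i * (\sum_j \sum_k sig a j k * P1 (e i (a i)) k j).
  move=> a.
  under eq_bigr => j _ do under eq_bigr => k _ do rewrite mulr_sumr.
  under eq_bigr => j _ do rewrite exchange_big /=.
  rewrite exchange_big /=; apply: eq_bigr => i _.
  rewrite mulr_sumr; apply: eq_bigr => j _; rewrite mulr_sumr; apply: eq_bigr => k _.
  by rewrite /Pm /P1 /ua mulrCA.
under eq_bigr => a _ do rewrite E.
rewrite exchange_big /= /s2 mulr_sumr; apply: eq_bigr => i _.
by rewrite -big_distrr /= sum_i expr2; ring.
Qed.

Lemma main2 : s2 t <= 1.
Proof.
have H : forall a, 2 * Lq (sig a) (ua a) t <= tau (sig a) * ((1 - d%:R^-1) * (1 + s2 t)).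
  move=> a; apply: hs_final => //; [exact: hu1a | exact: hGa].
have : \sum_a 2 * Lq (sig a) (ua a) t <= \sum_a tau (sig a) * ((1 - d%:R^-1) * (1 + s2 t)).
  by apply: ler_sum => a _; exact: H.
rewrite -big_distrr /= sum_Lq -big_distrl /= sum_tau.
have -> : d%:R * ((1 - d%:R^-1) * (1 + s2 t)) = (d%:R - 1) * (1 + s2 t) by field; apply: dn.
have dpos : (0 : C) < d%:R - 1 by rewrite subr_gt0 ltr1n.
rewrite mulrCA ler_pM2l // => h.
by rewrite -(lerD2l (s2 t)) -mulr2n -mulr_natl (le_trans h) // addrC.
Qed.

End Main2.

Lemma completeness (C : numClosedFieldType) (d : nat) (e : 'I_d -> 'I_d -> C) :
  (forall b b', inn (e b) (e b') = (b == b')%:R) ->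
  forall x y, \sum_c (e c x)^* * e c y = (x == y)%:R.
Proof.
move=> ho x y.
pose U : 'M[C]_d := \matrix_(k, c) e c k.
pose Uh : 'M[C]_d := \matrix_(c, k) (e c k)^*.
have h1 : Uh *m U = 1%:M.
  apply/matrixP => c c'; rewrite !mxE -ho /inn; apply: eq_bigr => k _; by rewrite !mxE.
have := congr1 (fun M : 'M[C]_d => M y x) (mulmx1C h1).
rewrite !mxE eq_sym => <-; apply: eq_bigr => c _; by rewrite !mxE mulrC.
Qed.

Lemma prod_sum_fix (C : numClosedFieldType) (I J : finType) (i : I) (b : J) (F : I -> J -> C) :
  \sum_(a : {ffun I -> J} | a i == b) \prod_j F j (a j) = F i b * \prod_(j | j != i) \sum_c F j c.
Proof.
pose F' j c := if j == i then (c == b)%:R * F j c else F j c.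
have E1 : \prod_j \sum_c F' j c = F i b * \prod_(j | j != i) \sum_c F j c.
  rewrite (bigD1 i) //= /F' eqxx sum_delta; congr (_ * _).
  by apply: eq_bigr => j /negbTE ->.
rewrite -E1 bigA_distr_bigA /= big_mkcond /=; apply: eq_bigr => a _.
rewrite (bigD1 i) //= [in RHS](bigD1 i) //= /F' eqxx.
have -> : \prod_(j | j != i) (if j == i then (a j == b)%:R * F j (a j) else F j (a j))
  = \prod_(j | j != i) F j (a j) by apply: eq_bigr => j /negbTE ->.
by case: (a i == b); rewrite ?mul1r ?mul0r.
Qed.

Section Quantum.
Variable R : realType.
Local Notation C := R[i].
Variable d : nat.
Variable I : finType.
Variable Psi : qmap R 'I_d {ffun I -> 'I_d}.
Hypothesis hlin : is_linear_map Psi.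
Hypothesis hcp : completely_positive Psi.

Definition Emat (x y : 'I_d) : op R 'I_d := fun p q => ((p == x) && (q == y))%:R.

Lemma Psi_zero : Psi (fun _ _ => 0) = fun _ _ => 0.
Proof.
have h := hlin 1 (fun _ _ => 0) (fun _ _ => 0).
have e : (fun i j : 'I_d => (1 : C) * 0 + 0) = (fun _ _ => 0).
  by apply: functional_extensionality => i; apply: functional_extensionality => j; rewrite mulr0 addr0.
rewrite e in h.
apply: functional_extensionality => z; apply: functional_extensionality => w.
have := congr1 (fun f => f z w) h; rewrite /= mul1r => h2.
by apply: (addrI (Psi (fun _ _ => 0) z w)); rewrite addr0 -h2.
Qed.

Lemma Psi_sum (J : Type) (r : seq J) (c : J -> C) (F : J -> op R 'I_d) :
  Psi (fun x y => \sum_(m <- r) c m * F m x y) = fun z w => \sum_(m <- r) c m * Psi (F m) z w.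
Proof.
elim: r => [|m r IH].
  have e : (fun x y : 'I_d => \sum_(m <- [::]) c m * F m x y) = (fun _ _ => 0).
    by apply: functional_extensionality => i; apply: functional_extensionality => j; rewrite big_nil.
  rewrite e Psi_zero; apply: functional_extensionality => i; apply: functional_extensionality => j.
  by rewrite big_nil.
have e : (fun x y : 'I_d => \sum_(m0 <- m :: r) c m0 * F m0 x y) =
   (fun x y => c m * F m x y + (fun x y => \sum_(m0 <- r) c m0 * F m0 x y) x y).
  by apply: functional_extensionality => i; apply: functional_extensionality => j; rewrite big_cons.
rewrite e hlin IH; apply: functional_extensionality => i; apply: functional_extensionality => j.
by rewrite big_cons.
Qed.

Lemma op_expand (X : op R 'I_d) :
  X = fun x y => \sum_(p : 'I_d * 'I_d) X p.1 p.2 * Emat p.1 p.2 x y.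
Proof.
apply: functional_extensionality => x; apply: functional_extensionality => y.
rewrite (bigD1 (x, y)) //= /Emat !eqxx /= mulr1 big1 ?addr0 // => [[p q]] /=.
move=> ne; rewrite /Emat; case: andP => [[/eqP ex /eqP ey]|_]; last by rewrite mulr0.
by move: ne; rewrite ex ey eqxx.
Qed.

Lemma Psi_expand X z w : Psi X z w = \sum_(p : 'I_d * 'I_d) X p.1 p.2 * Psi (Emat p.1 p.2) z w.
Proof.
rewrite {1}(op_expand X).
by rewrite (Psi_sum (index_enum _) (fun p => X p.1 p.2) (fun p => Emat p.1 p.2)).
Qed.

Lemma sum_I1 (T : finType) (G : T -> C) : \sum_(p : ('I_1 * T)%type) G p.2 = \sum_z G z.
Proof. by rewrite -(pair_big predT predT (fun (_ : 'I_1) j => G j)) /= big_ord1. Qed.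

Lemma Psi_psd (v : 'I_d -> C) : psd (Psi (fun x y => v x * (v y)^*)).
Proof.
pose X' : op R ('I_1 * 'I_d)%type := fun p q => v p.2 * (v q.2)^*.
have hX' : psd X'.
  move=> u; rewrite /X'.
  set S := \sum_p (u p)^* * v p.2.
  have -> : \sum_p \sum_q (u p)^* * (v p.2 * (v q.2)^*) * u q = S * S^*.
    rewrite /S conj_sum big_distrlr /=; apply: eq_bigr => p _; apply: eq_bigr => q _.
    by rewrite conjM (@conjCK C); ring.
  exact: mul_conjC_ge0.
have H := hcp hX'.
move=> phi.
have := H (fun p => phi p.2).
rewrite /ampl /X' /=.
under eq_bigr => p _ do rewrite (sum_I1 (fun w => (phi p.2)^* * Psi (fun i j => v i * (v j)^*) p.2 w * phi w)).
by rewrite (sum_I1 (fun z => \sum_w (phi z)^* * Psi (fun i j => v i * (v j)^*) z w * phi w)).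
Qed.

Lemma upd_at (z : {ffun I -> 'I_d}) i y : (upd z i y) i = y.
Proof. by rewrite /upd ffunE eqxx. Qed.

Lemma prod_eq_upd (z w : {ffun I -> 'I_d}) i :
  \prod_(j | j != i) ((z j == w j)%:R : C) = (w == upd z i (w i))%:R.
Proof.
case: (boolP (w == upd z i (w i))) => [/eqP hw | hw].
  rewrite big1 // => j ne; by rewrite hw /upd ffunE (negbTE ne) eqxx.
case: (pickP (fun j => (j != i) && (z j != w j))) => [j /andP [ne hj] | h].
  by rewrite (bigD1 j) //= (negbTE hj) mul0r.
exfalso; move/negP: hw; apply; apply/eqP/ffunP => j; rewrite /upd ffunE.
case: eqP => [-> //|/eqP ne].
by have := h j; rewrite ne /= => /negbFE /eqP.
Qed.

Lemma sum_upd (z : {ffun I -> 'I_d}) i (F : {ffun I -> 'I_d} -> C) :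
  \sum_w F w * (w == upd z i (w i))%:R = \sum_y F (upd z i y).
Proof.
under [RHS]eq_bigr => y _ do rewrite -(sum_delta' (upd z i y) F).
rewrite exchange_big /=; apply: eq_bigr => w _.
rewrite (bigD1 (w i)) //= big1 ?addr0 // => y ne.
case: eqP => [hw|_]; last by rewrite mulr0.
by move: ne; rewrite hw upd_at eqxx.
Qed.

Variable e : I -> 'I_d -> 'I_d -> C.
Hypothesis horth : forall i b b', inn (e i b) (e i b') = (b == b')%:R.

Definition phi (a z : {ffun I -> 'I_d}) : C := \prod_i e i (a i) (z i).
Definition gf (a : {ffun I -> 'I_d}) (X : op R 'I_d) : C :=
  \sum_z \sum_w (phi a z)^* * Psi X z w * phi a w.

Lemma marg_sum i b (Y : op R {ffun I -> 'I_d}) :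
  \sum_(a : {ffun I -> 'I_d} | a i == b) \sum_z \sum_w (phi a z)^* * Y z w * phi a w =
  \sum_x \sum_y (e i b x)^* * marginal i Y x y * e i b y.
Proof.
have E1 : forall z w, \sum_(a : {ffun I -> 'I_d} | a i == b) (phi a z)^* * Y z w * phi a w
   = Y z w * ((e i b (z i))^* * e i b (w i)) * (w == upd z i (w i))%:R.
  move=> z w.
  have -> : \sum_(a : {ffun I -> 'I_d} | a i == b) (phi a z)^* * Y z w * phi a w =
     Y z w * \sum_(a : {ffun I -> 'I_d} | a i == b) \prod_j ((e j (a j) (z j))^* * e j (a j) (w j)).
    rewrite mulr_sumr; apply: eq_bigr => a _.
    by rewrite /phi conj_prod big_split /=; ring.
  rewrite (prod_sum_fix i b (fun j c => (e j c (z j))^* * e j c (w j))) -prod_eq_upd.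
  rewrite mulrA; congr (_ * _); apply: eq_bigr => j _.
  by apply: completeness.
rewrite exchange_big /=.
under eq_bigr => z _ do rewrite exchange_big /= (eq_bigr _ (fun w _ => E1 z w))
   (sum_upd z i (fun w => Y z w * ((e i b (z i))^* * e i b (w i)))).
rewrite /marginal.
have E2 : forall x y, (e i b x)^* * (\sum_(z : {ffun I -> 'I_d} | z i == x) Y z (upd z i y)) * e i b y
   = \sum_(z : {ffun I -> 'I_d} | z i == x) Y z (upd z i y) * ((e i b (z i))^* * e i b ((upd z i y) i)).
  move=> x y; rewrite mulr_sumr mulr_suml; apply: eq_bigr => z /eqP ->.
  by rewrite upd_at; ring.
under [RHS]eq_bigr => x _ do rewrite (eq_bigr _ (fun y _ => E2 x y)) exchange_big /=.
by rewrite -(partI i).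
Qed.

Definition sg a (j k : 'I_d) : C := gf a (Emat k j).

Lemma gf_expand a X : gf a X = \sum_(p : ('I_d * 'I_d)%type) X p.1 p.2 * gf a (Emat p.1 p.2).
Proof.
rewrite /gf.
under eq_bigr => z _ do under eq_bigr => w _ do rewrite Psi_expand mulr_sumr mulr_suml.
under eq_bigr => z _ do rewrite exchange_big /=.
rewrite exchange_big /=; apply: eq_bigr => p _.
rewrite mulr_sumr; apply: eq_bigr => z _; rewrite mulr_sumr; apply: eq_bigr => w _.
by ring.
Qed.

Lemma sg_psd a : psdg (sg a).
Proof.
move=> v.
have h := Psi_psd v (phi a).
have -> : \sum_i \sum_j (v i)^* * sg a i j * v j = gf a (fun x y => v x * (v y)^*).
  rewrite gf_expand -(pair_big predT predT (fun x y => v x * (v y)^* * gf a (Emat x y))) /=.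
  rewrite exchange_big /=; apply: eq_bigr => j _; apply: eq_bigr => k _.
  by rewrite /sg; ring.
exact: h.
Qed.

Lemma andb_natr (x y : bool) : ((x && y)%:R : C) = x%:R * y%:R.
Proof. by case: x; case: y; rewrite /= ?mulr1 ?mulr0 ?mul0r. Qed.

Lemma trace_Emat k j : trace (Emat k j) = (k == j)%:R.
Proof.
rewrite /trace /Emat; under eq_bigr => x _ do rewrite andb_natr.
rewrite (sum_delta_l k (fun x => (x == j)%:R)); done.
Qed.

Lemma sg_marg (tt : I -> R) (hmarg : forall i X, marginal i (Psi X) = @depol R d (tt i) X) i b j k :
  \sum_(a : {ffun I -> 'I_d} | a i == b) sg a j k =
  ((tt i)%:C)%C * (e i b j * (e i b k)^*) + (1 - ((tt i)%:C)%C) * ((j == k)%:R / d%:R).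
Proof.
rewrite /sg /gf marg_sum hmarg /depol trace_Emat /Emat.
set t := ((tt i)%:C)%C.
have -> : ((1 - tt i)%:C)%C = 1 - t by rewrite /t rmorphB rmorph1.
have E : forall x y, (e i b x)^* * (t * ((x == k) && (y == j))%:R + (1 - t) * ((k == j)%:R / d%:R * (x == y)%:R)) * e i b y
   = t * ((x == k)%:R * ((y == j)%:R * ((e i b x)^* * e i b y)))
     + (1 - t) * ((k == j)%:R / d%:R) * ((y == x)%:R * ((e i b x)^* * e i b y)).
  by move=> x y; rewrite andb_natr [y == x]eq_sym; ring.
under eq_bigr => x _ do rewrite (eq_bigr _ (fun y _ => E x y)) big_split /= -!mulr_sumr
   (sum_delta_l j (fun y => (e i b x)^* * e i b y)) (sum_delta_l x (fun y => (e i b x)^* * e i b y)).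
rewrite big_split /= -!mulr_sumr (sum_delta_l k (fun x => (e i b x)^* * e i b j)).
have -> : \sum_x (e i b x)^* * e i b x = 1.
  by have h := horth i b b; rewrite eqxx /inn in h; exact: h.
by rewrite mulr1 eq_sym (mulrC ((e i b k)^*)).
Qed.

End Quantum.

Section Final.
Variable R : realType.

Lemma inn_conj (d : nat) (u v : 'I_d -> R[i]) : inn v u = (inn u v)^*.
Proof. rewrite /inn conj_sum; apply: eq_bigr => k _; by rewrite conjM (@conjCK _) mulrC. Qed.

Lemma key (d : nat) (hd2 : (1 < d)%N) (I : finType) (i0 : I) (e : I -> 'I_d -> 'I_d -> R[i])
  (horth : forall i b b', inner (e i b) (e i b') = (b == b')%:R)
  (hunb : forall i i', i != i' -> unbiased (e i) (e i'))
  (tt : I -> R) :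
  compatible (fun i => @depol R d (tt i)) -> \sum_i tt i ^+ 2 <= 1.
Proof.
case=> Psi [[hlin hcp _] hm].
have hG : forall i i', i != i' -> forall b b',
    inn (e i b) (e i' b') * inn (e i' b') (e i b) = d%:R^-1.
  move=> i i' ne b b'; rewrite [inn (e i' b') _]inn_conj -normCK.
  have := hunb i i' ne b b'; rewrite /inner -/(inn _ _) => ->.
  by rewrite exprVn sqrtCK.
have ht : forall i, (((tt i)%:C)%C)^* = ((tt i)%:C)%C.
  move=> i; apply/CrealP/complex_realP; by exists (tt i).
have := @main2 _ d hd2 I i0 e (fun i => ((tt i)%:C)%C) ht horth hG (sg Psi e)
  (sg_psd hlin hcp e) (sg_marg horth hm).
rewrite /s2.
have -> : \sum_i ((tt i)%:C)%C ^+ 2 = ((\sum_i tt i ^+ 2)%:C)%C.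
  by rewrite rmorph_sum; apply: eq_bigr => i _; rewrite rmorphXn.
by rewrite -[1 : R[i]]/((1%:C)%C) lecR.
Qed.

Lemma max_mubs_d (d D : nat) : @max_mubs R d D -> (1 < d)%N.
Proof.
case=> _ hmax.
case: d hmax => [|[|d]] hmax //.
  suff : (D.+1 <= D)%N by rewrite ltnn.
  apply: hmax; exists (fun _ _ _ => 0); split; first by move=> k [].
  by move=> k l _ [].
suff : (D.+1 <= D)%N by rewrite ltnn.
apply: hmax; exists (fun _ _ _ => 1); split.
  move=> k i j; rewrite /inner big_ord1 conjC1 mulr1.
  by rewrite !ord1 eqxx.
move=> k l _ i j; rewrite /inner big_ord1 conjC1 mulr1 sqrtC1 invr1.
by rewrite normr1.
Qed.

End Final.

Unset Implicit Arguments.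
Set Strict Implicit.

Lemma noncompat_aux (R : realType) (d N K D : nat) (t : 'I_N -> R)
  (hd2 : (1 < d)%N) (hK : (0 < K)%N) (KD : (K <= D)%N)
  (B : 'I_D -> 'I_d -> 'I_d -> R[i])
  (hB1 : forall k, orthonormal_basis (B k))
  (hB2 : forall k l, k != l -> unbiased (B k) (B l))
  (S : {set 'I_N}) : #|S| = K -> 1 < \sum_(i in S) t i ^+ 2 ->
  ~ compatible (@subfamily R N d (fun i => @depol R d (t i)) S).
Proof.
move=> hS hsum hc.
pose I := {x : 'I_N | x \in S}.
have cI : #|{: I}| = K by rewrite card_sig -hS; apply: eq_card.
have hle : (#|{: I}| <= D)%N by rewrite cI.
have : (0 < #|{: I}|)%N by rewrite cI.
case/card_gt0P => i0 _.
pose e (i : I) := B (widen_ord hle (enum_rank i)).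
have horth : forall i b b', inner (e i b) (e i b') = (b == b')%:R by move=> i; apply: hB1.
have hunb : forall i i', i != i' -> unbiased (e i) (e i').
  move=> i i' ne; apply: hB2; apply: contra ne => /eqP h.
  by apply/eqP/enum_rank_inj/val_inj; move: (congr1 val h).
have := key hd2 i0 horth hunb (tt := fun i : I => t (sval i)) hc.
move=> h; rewrite (big_sub S (fun i => t i ^+ 2)) /= in hsum.
by move: (lt_le_trans hsum h); rewrite ltxx.
Qed.

Theorem corollary7p2 (R : realType) (d N K : nat) (t : 'I_N -> R)
  (ht : forall i, 0 <= t i <= 1)
  (hK : (0 < K)%N)
  (hKD : exists D, @max_mubs R d D /\ (K <= minn N D)%N) :
  ((exists S : {set 'I_N}, #|S| = K /\ 1 < \sum_(i in S) t i ^+ 2) ->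
     NK_incompatible K (fun i => @depol R d (t i)))
  /\
  ((forall S : {set 'I_N}, #|S| = K -> 1 < \sum_(i in S) t i ^+ 2) ->
     NK_strongly_incompatible K (fun i => @depol R d (t i))).
Proof.
case: hKD => D [hmax hKD'].
have hd2 := max_mubs_d hmax.
case: hmax => [[B [hB1 hB2]] _].
have KD : (K <= D)%N by move: hKD'; rewrite leq_min => /andP [].
have nc := @noncompat_aux R d N K D t hd2 hK KD B hB1 hB2.
split.
  by case=> S [hS hsum]; exists S; split => //; exact: nc.
by move=> H S hS; exact: nc (H S hS).
Qed.
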